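(* Let $N\ge2$, $M\ge1$, $k\ge0$ and let $\psi\in\mathcal H_M$. Then the operators $\mathcal T^k(|\psi\rangle\langle\psi|)$ on $\mathcal H_{M+k}$ and $\mathcal W_k(|\psi\rangle\langle\psi|)$ on $\mathcal H_k$ have the same nonzero eigenvalues, counted with multiplicity.
   Context: For $n\ge0$, $\mathcal H_n=P_n(\mathbb C^N)^{\otimes n}$ is the totally symmetric subspace ($P_n$ the symmetrizing projection, $\mathcal H_0=\mathbb C$). On the bosonic Fock space $\bigoplus_{n}\mathcal H_n$, $a^*(v)\phi=\sqrt{n+1}P_{n+1}(v\otimes\phi)$ for $\phi\in\mathcal H_n$, $a(v)=a^*(v)^*$; with an orthonormal basis $e_1,\dots,e_N$ of $\mathbb C^N$, $a_i=a(e_i)$. $\mathcal T^k(\Gamma)=\frac{(M+k)!}{M!}P_{M+k}(I_{\mathbb C^N}^{\otimes k}\otimes\Gamma)P_{M+k}$ for operators $\Gamma=P_M\Gamma P_M$ on $\mathcal H_M$. $\mathcal W_k(\Gamma)=\frac1{k!}\sum_{i_1,\dots,i_k}\sum_{j_1,\dots,j_k}\mathrm{Tr}_{\mathcal H_M}(\Gamma\,a_{i_1}\cdots a_{i_k}a^*_{j_k}\cdots a^*_{j_1})\,a^*_{i_1}\cdots a^*_{i_k}a_{j_k}\cdots a_{j_1}$ restricted to $\mathcal H_k$. *)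

(* Defs.v *)
(* Complex scalars: an arbitrary numClosedFieldType C
   (algebraically closed field with conjugation and order, e.g. algC; C is the
   abstract stand-in for the complex numbers). *)
From HB Require Import structures.
From mathcomp Require Import all_boot all_order all_algebra all_fingroup.
Set Implicit Arguments. Unset Strict Implicit. Unset Printing Implicit Defensive.
Import Order.TTheory GRing.Theory Num.Theory.
Local Open Scope ring_scope.

Section Fock.
Variable C : numClosedFieldType.
Variable N : nat.

(* Basis of (C^N)^{(x) n}: e_{t_1} (x) ... (x) e_{t_n}, t : n.-tuple 'I_N. *)
Definition tdim (n : nat) : nat := #|{: n.-tuple 'I_N}|.
Definition idx (n : nat) (i : 'I_(tdim n)) : n.-tuple 'I_N := enum_val i.
Definition ridx (n : nat) (t : n.-tuple 'I_N) : 'I_(tdim n) := enum_rank t.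

Definition adjmx (m n : nat) (A : 'M[C]_(m, n)) : 'M[C]_(n, m) :=
  (map_mx Num.conj A)^T.

Definition ket (i : 'I_N) : 'cV[C]_N := delta_mx i 0.

(* the symmetrizing projection P_n = (1/n!) sum_{sigma in S_n} U_sigma *)
Definition Psym (n : nat) : 'M[C]_(tdim n) :=
  \matrix_(i, j)
    ((n`!)%:R^-1 *
     (#|[set s : 'S_n | [tuple tnth (idx j) (s k) | k < n] == idx i]|)%:R).

(* the operator phi |-> v (x) phi from (C^N)^{(x) n} to (C^N)^{(x) n+1} *)
Definition tensmx (n : nat) (v : 'cV[C]_N) : 'M[C]_(tdim n.+1, tdim n) :=
  \matrix_(i, j) (v (thead (idx i)) 0 * (behead_tuple (idx i) == idx j)%:R).

(* creation operator a^*(v) : H_n -> H_{n+1},  a^*(v) phi = sqrt(n+1) P_{n+1}(v (x) phi),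
   extended by 0 on the orthogonal complement of H_n *)
Definition adag (n : nat) (v : 'cV[C]_N) : 'M[C]_(tdim n.+1, tdim n) :=
  sqrtC (n.+1)%:R *: (Psym n.+1 *m tensmx n v *m Psym n).

Definition annih (n : nat) (v : 'cV[C]_N) : 'M[C]_(tdim n, tdim n.+1) :=
  adjmx (adag n v).

(* creas M vs k = a^*(vs (k-1)) ... a^*(vs 1) a^*(vs 0) : H_M -> H_{k+M} *)
Fixpoint creas (M : nat) (vs : nat -> 'cV[C]_N) (k : nat)
  : 'M[C]_(tdim (k + M), tdim M) :=
  match k with
  | 0 => 1%:M
  | k'.+1 => adag (k' + M) (vs k') *m creas M vs k'
  end.

Definition kets (k : nat) (t : k.-tuple 'I_N) : nat -> 'cV[C]_N :=
  fun n => nth 0 (map ket t) n.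
Definition rkets (k : nat) (t : k.-tuple 'I_N) : nat -> 'cV[C]_N :=
  fun n => nth 0 (rev (map ket t)) n.

(* a^*_{j_k} ... a^*_{j_1} : H_M -> H_{k+M} *)
Definition crea_prod (M k : nat) (j : k.-tuple 'I_N) : 'M[C]_(tdim (k + M), tdim M) :=
  creas M (kets j) k.
(* a^*_{i_1} ... a^*_{i_k} : H_M -> H_{k+M} *)
Definition crea_prod_rev (M k : nat) (i : k.-tuple 'I_N) : 'M[C]_(tdim (k + M), tdim M) :=
  creas M (rkets i) k.

(* I^{(x) 1} (x) A *)
Definition idop (n : nat) (A : 'M[C]_(tdim n)) : 'M[C]_(tdim n.+1) :=
  \matrix_(i, j) ((thead (idx i) == thead (idx j))%:R *
                  A (ridx (behead_tuple (idx i))) (ridx (behead_tuple (idx j)))).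

Fixpoint idk (M : nat) (k : nat) (A : 'M[C]_(tdim M)) : 'M[C]_(tdim (k + M)) :=
  match k with
  | 0 => A
  | k'.+1 => idop (idk k' A)
  end.

Definition Tk (M k : nat) (G : 'M[C]_(tdim M)) : 'M[C]_(tdim (k + M)) :=
  ((k + M)`!)%:R / (M`!)%:R *: (Psym (k + M) *m idk k G *m Psym (k + M)).

Definition Wk (M k : nat) (G : 'M[C]_(tdim M)) : 'M[C]_(tdim (k + 0)) :=
  (k`!)%:R^-1 *:
  \sum_(i : k.-tuple 'I_N) \sum_(j : k.-tuple 'I_N)
     (\tr (G *m (adjmx (crea_prod_rev M i) *m crea_prod M j)) *:
      (crea_prod_rev 0 i *m adjmx (crea_prod_rev 0 j))).

(* Matrix (in the basis given by the rows of row_base P) of the restriction of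
   the operator A (acting on column vectors) to the subspace
   H = range of P (P self-adjoint, so range P = row space of P). *)
Definition restr (n : nat) (P A : 'M[C]_n) : 'M[C]_(\rank P) :=
  row_base P *m A^T *m pinvmx (row_base P).

Definition eigmult (n : nat) (A : 'M[C]_(tdim n)) (lambda : C) : nat :=
  mup lambda (char_poly (restr (Psym n) A)).

End Fock.

Arguments Tk {C N} M k G.
Arguments Wk {C N} M k G.
Arguments eigmult {C N} n A lambda.
Arguments Psym {C} N n.
Arguments adjmx {C m n} A.

(* Main.v *)
Require Import Defs.
From HB Require Import structures.
From mathcomp Require Import all_boot all_order all_algebra all_fingroup.
Set Implicit Arguments. Unset Strict Implicit. Unset Printing Implicit Defensive.
Import Order.TTheory GRing.Theory Num.Theory.
Local Open Scope ring_scope.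
Section LA.
Variable F : fieldType.

Lemma sylvester m n (X : 'M[F]_(m, n)) (Y : 'M[F]_(n, m)) :
  'X^n * char_poly (X *m Y) = 'X^m * char_poly (Y *m X).
Proof.
set x : {poly F} := 'X.
set Xp := map_mx polyC X; set Yp := map_mx polyC Y.
pose M0 := block_mx (x%:M : 'M_m) Xp Yp (1%:M : 'M_n).
have e1 : block_mx 1%:M (- Xp) 0 1%:M *m M0 = block_mx (char_poly_mx (X *m Y)) 0 Yp 1%:M.
  rewrite mulmx_block !mul1mx !mul0mx !add0r mulmx1 mulNmx addrN.
  by rewrite /char_poly_mx map_mxM addrC.
have e2 : block_mx 1%:M 0 (- Yp) (x%:M) *m M0 = block_mx (x%:M) Xp 0 (char_poly_mx (Y *m X)).
  rewrite mulmx_block !mul1mx !mul0mx !addr0 ?mulNmx ?mul_mx_scalar ?mul_scalar_mx.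
  by rewrite addNr scale1r /char_poly_mx map_mxM addrC.
have d1 := congr1 determinant e1.
have d2 := congr1 determinant e2.
rewrite det_mulmx det_ublock det_lblock !det1 !mul1r mulr1 in d1.
rewrite det_mulmx det_ublock det_lblock !det1 !mul1r det_scalar in d2.
rewrite /char_poly -d1 d2. rewrite det_scalar; reflexivity.
Qed.

Lemma mup_sylvester m n (X : 'M[F]_(m, n)) (Y : 'M[F]_(n, m)) (l : F) : l != 0 ->
  mup l (char_poly (X *m Y)) = mup l (char_poly (Y *m X)).
Proof.
move=> l0.
have nr p : ~~ root ('X^p : {poly F}) l by rewrite rootE hornerXn expf_neq0.
by rewrite -(mupMr _ (nr n)) sylvester (mupMr _ (nr m)).
Qed.

Lemma char_poly_tr n (A : 'M[F]_n) : char_poly A^T = char_poly A.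
Proof.
rewrite /char_poly -det_tr; congr (\det _).
by rewrite /char_poly_mx linearB /= tr_scalar_mx -map_trmx trmxK.
Qed.

Lemma restr_mup n (P A : 'M[F]_n) (l : F) : l != 0 ->
  P^T = P -> P *m A = A ->
  mup l (char_poly (row_base P *m A^T *m pinvmx (row_base P))) = mup l (char_poly A).
Proof.
move=> l0 PT PA.
rewrite -mulmxA mup_sylvester //.
have sub : (A^T <= row_base P)%MS.
  by rewrite eq_row_base -PA trmx_mul PT submxMl.
by rewrite mulmxKpV // char_poly_tr.
Qed.
End LA.

Section Comb.
Variable C : numClosedFieldType.
Variable N : nat.
Local Notation tdim := (tdim N).
Local Notation idx := (@idx N _).
Local Notation ridx := (@ridx N _).
Local Notation Psym := (Psym (C:=C) N).

Lemma ridxK n (t : n.-tuple 'I_N) : idx (ridx t) = t.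
Proof. exact: enum_rankK. Qed.
Lemma idxK n (i : 'I_(tdim n)) : ridx (idx i) = i.
Proof. exact: enum_valK. Qed.
Lemma idx_inj n : injective (@Defs.idx N n).
Proof. exact: can_inj (@idxK n). Qed.

Lemma sum_idx n (w : n.-tuple 'I_N) (f : 'I_(tdim n) -> C) :
  \sum_(l : 'I_(tdim n)) (idx l == w)%:R * f l = f (ridx w).
Proof.
rewrite (bigD1 (ridx w)) //= ridxK eqxx mul1r big1 ?addr0 // => l nl.
case: eqP => [e|]; last by rewrite mul0r.
by case/eqP: nl; rewrite -e idxK.
Qed.

Definition tcomp n (t : n.-tuple 'I_N) (s : 'S_n) : n.-tuple 'I_N :=
  [tuple tnth t (s x) | x < n].

Lemma tcompM n (t : n.-tuple 'I_N) s s' : tcomp (tcomp t s) s' = tcomp t (s' * s).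
Proof. by apply: eq_from_tnth => x; rewrite !tnth_mktuple permM. Qed.

Lemma tcomp1 n (t : n.-tuple 'I_N) : tcomp t 1 = t.
Proof. by apply: eq_from_tnth => x; rewrite !tnth_mktuple perm1. Qed.

Lemma tcompV n (t u : n.-tuple 'I_N) s : (tcomp t s == u) = (tcomp u s^-1 == t).
Proof.
apply/eqP/eqP => <-; rewrite tcompM ?mulVg ?mulgV tcomp1 //.
Qed.

Definition Umx n (s : 'S_n) : 'M[C]_(tdim n) :=
  \matrix_(i, j) ((tcomp (idx j) s == idx i)%:R).

Lemma Psym_sum n : Psym n = (n`!)%:R^-1 *: \sum_(s : 'S_n) Umx s.
Proof.
apply/matrixP => i j; rewrite !mxE summxE; congr (_ * _).
rewrite -sum1_card natr_sum big_mkcond /=; apply: eq_bigr => s _.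
by rewrite !mxE inE; case: eqP.
Qed.

Lemma UmxM n (s t : 'S_n) : Umx s *m Umx t = Umx (s * t).
Proof.
apply/matrixP => i j; rewrite !mxE.
under eq_bigr do rewrite !mxE mulrC eq_sym.
by rewrite sum_idx ridxK tcompM.
Qed.

Lemma fact_neq0 n : (n`!)%:R != 0 :> C.
Proof. by rewrite pnatr_eq0 -lt0n fact_gt0. Qed.

Lemma PsymU n (t : 'S_n) : Psym n *m Umx t = Psym n.
Proof.
rewrite [X in X *m _]Psym_sum -scalemxAl mulmx_suml.
under eq_bigr do rewrite UmxM.
by rewrite [RHS]Psym_sum [in RHS](reindex_inj (mulIg t)).
Qed.

Lemma UPsym n (t : 'S_n) : Umx t *m Psym n = Psym n.
Proof.
rewrite [X in _ *m X]Psym_sum -scalemxAr mulmx_sumr.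
under eq_bigr do rewrite UmxM.
by rewrite [RHS]Psym_sum [in RHS](reindex_inj (mulgI t)).
Qed.

Lemma PsymP n : Psym n *m Psym n = Psym n.
Proof.
rewrite {2}Psym_sum -scalemxAr mulmx_sumr.
under eq_bigr do rewrite PsymU.
rewrite sumr_const card_Sn -scaler_nat scalerA.
by rewrite mulVf ?fact_neq0 // scale1r.
Qed.

Lemma Psym_tr n : (Psym n)^T = Psym n.
Proof.
rewrite Psym_sum linearZ /= linear_sum /=; congr (_ *: _).
rewrite (reindex_inj invg_inj) /=; apply: eq_bigr => s _.
by apply/matrixP => i j; rewrite !mxE (tcompV (idx j)).
Qed.

Lemma Psym_conj n : map_mx Num.conj (Psym n) = Psym n.
Proof.
by apply/matrixP => i j; rewrite !mxE rmorphM fmorphV /= !conjC_nat.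
Qed.

Lemma Psym_adj n : adjmx (Psym n) = Psym n.
Proof. by rewrite /adjmx Psym_conj Psym_tr. Qed.


Definition Tm k m (i : k.-tuple 'I_N) : 'M[C]_(tdim (k + m), tdim m) :=
  \matrix_(r, c) (idx r == cat_tuple i (idx c))%:R.

Definition psum_fun k m (s : 'S_k) (t : 'S_m) (x : 'I_(k + m)) : 'I_(k + m) :=
  match split x with inl a => lshift m (s a) | inr b => rshift k (t b) end.

Lemma psum_inj k m (s : 'S_k) (t : 'S_m) : injective (psum_fun s t).
Proof.
move=> x y; rewrite /psum_fun.
case: splitP => a ea; case: splitP => b eb /eqP; rewrite -val_eqE /=.
- by move/eqP/val_inj/perm_inj => eab; apply: ord_inj; rewrite ea eb eab.
- by move/eqP => e; have := ltn_ord (s a); rewrite e -ltn_subRL subnn.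
- by move/eqP => e; have := ltn_ord (s b); rewrite -e -ltn_subRL subnn.
- by move/eqP/addnI/val_inj/perm_inj => eab; apply: ord_inj; rewrite ea eb eab.
Qed.

Definition psum k m (s : 'S_k) (t : 'S_m) : 'S_(k + m) := perm (@psum_inj k m s t).

Lemma tcomp_cat k m (i : k.-tuple 'I_N) (c : m.-tuple 'I_N) s t :
  tcomp (cat_tuple i c) (psum s t) = cat_tuple (tcomp i s) (tcomp c t).
Proof.
apply: eq_from_tnth => x; rewrite tnth_mktuple permE /psum_fun.
case: splitP => a ea.
  have -> : x = lshift m a by apply: val_inj.
  by rewrite !tnth_lshift tnth_mktuple.
have -> : x = rshift k a by apply: val_inj.
by rewrite !tnth_rshift tnth_mktuple.
Qed.

Lemma Tm_U k m (i : k.-tuple 'I_N) (t : 'S_m) :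
  Tm m i *m Umx t = Umx (psum 1 t) *m Tm m i.
Proof.
apply/matrixP => r c; rewrite !mxE.
under eq_bigr do rewrite !mxE mulrC eq_sym.
rewrite sum_idx; under [RHS]eq_bigr do rewrite !mxE mulrC.
by rewrite sum_idx !ridxK tcomp_cat tcomp1 eq_sym.
Qed.

Lemma U_Tm k m (i : k.-tuple 'I_N) (s : 'S_k) :
  Umx (psum s 1) *m Tm m i = Tm m (tcomp i s).
Proof.
apply/matrixP => r c; rewrite !mxE.
under eq_bigr do rewrite !mxE mulrC.
by rewrite sum_idx !ridxK tcomp_cat tcomp1 eq_sym.
Qed.

Lemma absorb_back k m (i : k.-tuple 'I_N) :
  Psym (k + m) *m Tm m i *m Psym m = Psym (k + m) *m Tm m i.
Proof.
rewrite [X in _ *m X]Psym_sum -scalemxAr mulmx_sumr.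
under eq_bigr do rewrite -mulmxA Tm_U mulmxA PsymU.
rewrite sumr_const card_Sn -scaler_nat scalerA.
by rewrite mulVf ?fact_neq0 // scale1r.
Qed.

Lemma absorb_front k m (i : k.-tuple 'I_N) (s : 'S_k) :
  Psym (k + m) *m Tm m (tcomp i s) = Psym (k + m) *m Tm m i.
Proof. by rewrite -U_Tm mulmxA PsymU. Qed.

Lemma Tm0 m : Tm m [tuple] = 1%:M.
Proof.
apply/matrixP => r c; rewrite !mxE.
have -> : (idx r == cat_tuple [tuple] (idx c)) = (idx r == idx c).
  by rewrite -val_eqE /= val_eqE.
by rewrite (inj_eq (@idx_inj m)).
Qed.

Lemma Tm_cons k m (a : 'I_N) (i : k.-tuple 'I_N) :
  Tm (k + m) [tuple a] *m Tm m i = Tm m (cons_tuple a i).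
Proof.
apply/matrixP => r c; rewrite !mxE.
under eq_bigr do rewrite !mxE mulrC.
rewrite sum_idx ridxK.
by congr (_ %:R); rewrite -!val_eqE.
Qed.

Lemma tensmx_ket n (a : 'I_N) : tensmx n (ket C a) = Tm n [tuple a].
Proof.
apply/matrixP => r c; rewrite !mxE eqxx andbT.
rewrite -natrM mulnb; congr (_ %:R); congr (nat_of_bool _).
rewrite -!val_eqE /= [in RHS](tuple_eta (idx r)) /=.
by rewrite eqseq_cons.
Qed.


Lemma Umx1 n : Umx (1 : 'S_n) = 1%:M.
Proof.
apply/matrixP => i j; rewrite !mxE tcomp1 eq_sym.
by rewrite (inj_eq (@idx_inj n)).
Qed.

Lemma Psym0 : Psym 0 = 1%:M.
Proof.
rewrite Psym_sum (eq_bigr (fun _ => Umx 1)); last first.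
  by move=> s _; congr Umx; apply/permP => x; case: x.
by rewrite sumr_const card_Sn /= Umx1 invr1 scale1r.
Qed.

Fixpoint sc m k : C :=
  if k is k'.+1 then sqrtC ((k' + m).+1)%:R * sc m k' else 1.

Fixpoint rtup (a : nat -> 'I_N) k : k.-tuple 'I_N :=
  if k is k'.+1 then cons_tuple (a k') (rtup a k') else [tuple].

Lemma creasP M (vs : nat -> 'cV[C]_N) k (a : nat -> 'I_N) :
  (forall n, (n < k)%N -> vs n = ket C (a n)) ->
  creas M vs k *m Psym M = sc M k *: (Psym (k + M) *m Tm M (rtup a k)).
Proof.
elim: k => [|k IH] H /=.
  by rewrite mul1mx Tm0 mulmx1 scale1r.
rewrite -mulmxA IH; last by move=> n lt; apply: H; apply: ltnW.
rewrite /adag H // tensmx_ket -scalemxAl -scalemxAr scalerA; congr (_ *: _).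
rewrite -!mulmxA (mulmxA (Psym (k + M))) PsymP !mulmxA.
have -> : Psym (k + M).+1 *m Tm (k + M) [tuple a k] *m Psym (k + M)
   = Psym (k + M).+1 *m Tm (k + M) [tuple a k] by exact: (@absorb_back 1 (k + M) [tuple a k]).
by rewrite -mulmxA Tm_cons.
Qed.


Lemma adjmxE m n (A : 'M[C]_(m, n)) i j : adjmx A i j = (A j i)^*.
Proof. by rewrite !mxE. Qed.

Lemma adjmxM m n p (A : 'M[C]_(m, n)) (B : 'M[C]_(n, p)) :
  adjmx (A *m B) = adjmx B *m adjmx A.
Proof.
apply/matrixP => i j; rewrite !mxE rmorph_sum; apply: eq_bigr => l _.
by rewrite !mxE rmorphM mulrC.
Qed.

Lemma adjmxZ m n a (A : 'M[C]_(m, n)) : adjmx (a *: A) = a^* *: adjmx A.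
Proof. by apply/matrixP => i j; rewrite !mxE rmorphM. Qed.

Lemma adjmx_sum m n I (r : seq I) (F : I -> 'M[C]_(m, n)) :
  adjmx (\sum_(x <- r) F x) = \sum_(x <- r) adjmx (F x).
Proof.
apply/matrixP => i j; rewrite !mxE summxE rmorph_sum summxE.
by apply: eq_bigr => l _; rewrite !mxE.
Qed.

Lemma adjmxK m n (A : 'M[C]_(m, n)) : adjmx (adjmx A) = A.
Proof. by apply/matrixP => i j; rewrite !mxE conjCK. Qed.

Lemma adjmx_Tm k m (i : k.-tuple 'I_N) : adjmx (Tm m i) = (Tm m i)^T.
Proof. by apply/matrixP => r c; rewrite !mxE conjC_nat. Qed.

Lemma sum_tuple_cons (V : nmodType) n (F : n.+1.-tuple 'I_N -> V) :
  \sum_(t : n.+1.-tuple 'I_N) F t =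
  \sum_(a : 'I_N) \sum_(t : n.-tuple 'I_N) F (cons_tuple a t).
Proof.
rewrite pair_big /=.
rewrite (reindex (fun p : 'I_N * n.-tuple 'I_N => cons_tuple p.1 p.2)) //=.
exists (fun t : n.+1.-tuple 'I_N => (thead t, behead_tuple t)).
  by move=> [a t] _ /=; congr (_, _); apply: val_inj.
by move=> t _; rewrite [RHS]tuple_eta; apply: val_inj.
Qed.

Lemma idop_sum n (A : 'M[C]_(tdim n)) :
  idop A = \sum_(a : 'I_N) Tm n [tuple a] *m A *m (Tm n [tuple a])^T.
Proof.
have TE (r : 'I_(tdim n.+1)) a l :
    Tm n [tuple a] r l = (thead (idx r) == a)%:R * (idx l == behead_tuple (idx r))%:R.
  rewrite mxE -natrM mulnb; congr (_%:R); congr (nat_of_bool _).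
  rewrite -!val_eqE /= [in LHS](tuple_eta (idx r)) /= eqseq_cons.
  by rewrite [X in _ && X]eq_sym.
apply/matrixP => r s; rewrite !mxE summxE.
under eq_bigr => a _.
  rewrite mxE.
  under eq_bigr => l' _.
    rewrite mxE.
    under eq_bigr do rewrite TE -mulrA mulrCA.
    rewrite sum_idx mxE TE mulrA mulrC.
    over.
  rewrite /= sum_idx.
  over.
rewrite /= (bigD1 (thead (idx r))) //= eqxx mul1r big1 ?addr0; last first.
  by move=> a na; rewrite eq_sym (negPf na) !mul0r.
by rewrite mulrC eq_sym.
Qed.


Lemma sum_tuple0 (V : nmodType) (F : 0.-tuple 'I_N -> V) :
  \sum_(t : 0.-tuple 'I_N) F t = F [tuple].
Proof.
rewrite (eq_bigr (fun _ => F [tuple])); last by move=> t _; rewrite tuple0.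
by rewrite sumr_const card_tuple expn0.
Qed.

Lemma idkE M k (A : 'M[C]_(tdim M)) :
  idk k A = \sum_(i : k.-tuple 'I_N) Tm M i *m A *m (Tm M i)^T.
Proof.
elim: k => [|k IH] /=.
  by rewrite sum_tuple0 Tm0 trmx1 mulmx1 mul1mx.
rewrite IH idop_sum sum_tuple_cons; apply: eq_bigr => a _.
rewrite mulmx_sumr mulmx_suml; apply: eq_bigr => i _.
by rewrite -Tm_cons trmx_mul !mulmxA.
Qed.


Lemma sc_ge0 m k : 0 <= sc m k.
Proof. by elim: k => [|k IH] //=; rewrite mulr_ge0 // sqrtC_ge0 ler0n. Qed.

Lemma sc_conj m k : (sc m k)^* = sc m k.
Proof. exact: geC0_conj (sc_ge0 m k). Qed.

Lemma sc_sq m k : sc m k ^+ 2 * (m`!)%:R = ((k + m)`!)%:R.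
Proof.
elim: k => [|k IH] /=; first by rewrite expr1n mul1r.
by rewrite exprMn sqrtCK -mulrA IH -natrM addSn factS.
Qed.

Lemma rtupE (a : nat -> 'I_N) k : val (rtup a k) = rev (mkseq a k).
Proof. by elim: k => [|k IH] //=; rewrite IH mkseqS rev_rcons. Qed.

Definition revperm k : 'S_k := perm (@rev_ord_inj k).

Lemma tcomp_rev k (j : k.-tuple 'I_N) : tcomp j (revperm k) = [tuple of rev j].
Proof.
apply: eq_from_tnth => x; rewrite tnth_mktuple permE.
have d := tnth j x.
rewrite !(tnth_nth d) /= nth_rev ?size_tuple //.
Qed.

Lemma mkseq_nthk (x0 : 'I_N) (s : seq 'I_N) k : size s = k -> mkseq (nth x0 s) k = s.
Proof. by move=> <-; exact: mkseq_nth. Qed.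

Lemma crea_rev M k (x0 : 'I_N) (i : k.-tuple 'I_N) :
  crea_prod_rev C M i *m Psym M = sc M k *: (Psym (k + M) *m Tm M i).
Proof.
rewrite /crea_prod_rev (@creasP M _ k (nth x0 (rev i))).
  congr (_ *: (_ *m Tm _ _)); apply: val_inj.
  by rewrite rtupE mkseq_nthk ?revK // size_rev size_tuple.
move=> n lt; rewrite /rkets -map_rev (nth_map x0) // size_rev size_tuple //.
Qed.

Lemma crea_fwd M k (x0 : 'I_N) (j : k.-tuple 'I_N) :
  crea_prod C M j *m Psym M = sc M k *: (Psym (k + M) *m Tm M j).
Proof.
rewrite /crea_prod (@creasP M _ k (nth x0 j)).
  rewrite -[in RHS](absorb_front _ _ (revperm k)) tcomp_rev.
  congr (_ *: (_ *m Tm _ _)); apply: val_inj.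
  by rewrite rtupE mkseq_nthk // size_tuple.
move=> n lt; rewrite /kets (nth_map x0) // size_tuple //.
Qed.

Lemma Umx_tr n (s : 'S_n) : (Umx s)^T = Umx s^-1.
Proof. by apply/matrixP => i j; rewrite !mxE (tcompV (idx i)). Qed.

Lemma psum_surj k (s : 'S_(k + 0)) : exists t : 'S_k, s = psum t 1.
Proof.
pose f (a : 'I_k) : 'I_k :=
  match split (s (lshift 0 a)) with inl b => b | inr c => match c with Ordinal _ h => False_rect _ (notF h) end end.
have finj : injective f.
  move=> a b; rewrite /f.
  case: splitP => [x ex|[]//]; case: splitP => [y ey|[]//] exy.
  apply: (@lshift_inj k 0); apply: (@perm_inj _ s); apply: ord_inj.
  by rewrite ex ey exy.
exists (perm finj); apply/permP => x; rewrite permE /psum_fun.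
case: splitP => [a ea|[]//]; rewrite permE /f.
have -> : x = lshift 0 a by apply: ord_inj.
case: splitP => [b eb|[]//].
by apply: ord_inj; rewrite eb.
Qed.


Section Main.
Variables (M k : nat) (psi : 'cV[C]_(tdim M)).
Hypothesis Hpsi : Psym M *m psi = psi.
Variable x0 : 'I_N.

Local Notation P := (Psym (k + M)).
Local Notation Q := (Psym (k + 0)).
Definition c1 : 'M[C]_(tdim 0, 1) := const_mx 1.
Definition ff (i : k.-tuple 'I_N) : 'cV[C]_(tdim (k + M)) := Tm M i *m psi.
Definition gg (i : k.-tuple 'I_N) : 'cV[C]_(tdim (k + 0)) := Tm 0 i *m c1.
Definition EE : 'M[C]_(tdim (k + M), tdim (k + 0)) := \sum_i ff i *m (gg i)^T.
Definition cc : C := ((k + M)`!)%:R / (M`!)%:R.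

Lemma tdim0_eq (x y : 'I_(tdim 0)) : x = y.
Proof. by apply: (@idx_inj 0); rewrite (tuple0 (idx x)) (tuple0 (idx y)). Qed.

Lemma c1c1 : c1 *m c1^T = 1%:M.
Proof.
apply/matrixP => x y; rewrite !mxE big_ord1 !mxE mulr1 (tdim0_eq x y) eqxx.
by [].
Qed.

Lemma c1Tc1 : c1^T *m c1 = 1%:M.
Proof.
apply/matrixP => x y; rewrite !mxE !ord1 eqxx.
under eq_bigr do rewrite !mxE mulr1.
by rewrite sumr_const card_ord /Defs.tdim card_tuple expn0.
Qed.

Lemma TmTTm (i j : k.-tuple 'I_N) : (Tm 0 i)^T *m Tm 0 j = (i == j)%:R%:M.
Proof.
apply/matrixP => x y; rewrite !mxE (tdim0_eq x y) eqxx mulr1n.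
under eq_bigr do rewrite !mxE.
rewrite sum_idx ridxK eq_sym; congr (_%:R); congr (nat_of_bool _).
by rewrite -!val_eqE /= !tuple0 /= !cats0.
Qed.

Lemma gTg i j : (gg i)^T *m gg j = (i == j)%:R%:M.
Proof.
by rewrite /gg trmx_mul mulmxA -(mulmxA c1^T) TmTTm mul_mx_scalar -scalemxAl c1Tc1 scalemx1.
Qed.

Lemma adj_gg i : adjmx (gg i) = (gg i)^T.
Proof. by apply/matrixP => r s; rewrite !mxE rmorph_sum; apply: eq_bigr => l _; rewrite !mxE rmorphM rmorph1 rmorph_nat. Qed.

Lemma adjmx_tr m n (A : 'M[C]_(m, n)) : adjmx A^T = (adjmx A)^T.
Proof. by apply/matrixP => r s; rewrite !mxE. Qed.

Lemma ggT_adj i : adjmx (gg i)^T = gg i.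
Proof. by rewrite adjmx_tr adj_gg trmxK. Qed.

Lemma adjEE : adjmx EE = \sum_i gg i *m adjmx (ff i).
Proof. by rewrite /EE adjmx_sum; apply: eq_bigr => i _; rewrite adjmxM ggT_adj. Qed.

Lemma EEadjEE : EE *m adjmx EE = \sum_i ff i *m adjmx (ff i).
Proof.
rewrite adjEE /EE mulmx_suml; apply: eq_bigr => i _.
rewrite mulmx_sumr (bigD1 i) //= big1 ?addr0.
  by rewrite mulmxA -(mulmxA (ff i)) gTg eqxx mulmx1.
by move=> j nj; rewrite mulmxA -(mulmxA (ff i)) gTg (eq_sym i j) (negPf nj) mul_mx_scalar mulr0n scale0r mul0mx.
Qed.

Lemma idkG : idk k (psi *m adjmx psi) = EE *m adjmx EE.
Proof.
rewrite EEadjEE idkE; apply: eq_bigr => i _.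
by rewrite /ff adjmxM adjmx_Tm !mulmxA.
Qed.

Lemma Tk_eq : Tk M k (psi *m adjmx psi) = cc *: (P *m EE *m adjmx EE *m P).
Proof. by rewrite /Tk idkG !mulmxA. Qed.

Lemma tr11 (A : 'M[C]_1) : \tr A = A 0 0.
Proof. by rewrite /mxtrace big_ord1. Qed.

Lemma coef i j :
  \tr (psi *m adjmx psi *m (adjmx (crea_prod_rev C M i) *m crea_prod C M j)) =
  sc M k ^+ 2 * (adjmx (ff i) *m P *m ff j) 0 0.
Proof.
have eA : crea_prod_rev C M i *m psi = sc M k *: (P *m ff i).
  by rewrite -{1}Hpsi mulmxA (crea_rev _ x0) -scalemxAl -mulmxA.
have eB : crea_prod C M j *m psi = sc M k *: (P *m ff j).
  by rewrite -{1}Hpsi mulmxA (crea_fwd _ x0) -scalemxAl -mulmxA.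
rewrite -mulmxA mxtrace_mulC.
have -> : adjmx psi *m (adjmx (crea_prod_rev C M i) *m crea_prod C M j) *m psi
   = adjmx (crea_prod_rev C M i *m psi) *m (crea_prod C M j *m psi).
  by rewrite adjmxM !mulmxA.
rewrite eB eA tr11 adjmxZ sc_conj adjmxM Psym_adj -scalemxAl -scalemxAr scalerA.
rewrite mxE expr2; congr (_ * _).
have -> : adjmx (ff i) *m P *m (P *m ff j) = adjmx (ff i) *m (P *m P) *m ff j.
  by rewrite !mulmxA.
by rewrite PsymP.
Qed.

Lemma op0 i j :
  crea_prod_rev C 0 i *m adjmx (crea_prod_rev C 0 j) =
  sc 0 k ^+ 2 *: (Q *m gg i *m (gg j)^T *m Q).
Proof.
have e l : crea_prod_rev C 0 l = sc 0 k *: (Q *m Tm 0 l).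
  by rewrite -[LHS]mulmx1 -Psym0 (crea_rev _ x0).
rewrite !e adjmxZ sc_conj adjmxM Psym_adj adjmx_Tm -scalemxAl -scalemxAr scalerA expr2.
congr (_ *: _); rewrite /gg trmx_mul !mulmxA -(mulmxA _ c1) c1c1 mulmx1.
by [].
Qed.

Lemma rhs_expand :
  Q *m adjmx EE *m P *m EE *m Q =
  \sum_i \sum_j (adjmx (ff i) *m P *m ff j) 0 0 *: (Q *m gg i *m (gg j)^T *m Q).
Proof.
rewrite adjEE /EE mulmx_sumr !mulmx_suml [RHS]exchange_big; apply: eq_bigr => j _.
rewrite mulmx_sumr !mulmx_suml; apply: eq_bigr => i _.
have -> : Q *m (gg i *m adjmx (ff i)) *m P *m (ff j *m (gg j)^T) *m Q
   = Q *m gg i *m (adjmx (ff i) *m P *m ff j) *m (gg j)^T *m Q.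
  by rewrite !mulmxA.
by rewrite [X in _ *m X *m _ *m _]mx11_scalar mul_mx_scalar -!scalemxAl.
Qed.

Lemma Wk_eq : Wk M k (psi *m adjmx psi) = cc *: (Q *m adjmx EE *m P *m EE *m Q).
Proof.
rewrite rhs_expand /Wk.
under eq_bigr do under eq_bigr do rewrite coef op0 scalerA mulrAC -scalerA.
under eq_bigr do rewrite -scaler_sumr.
rewrite -scaler_sumr scalerA; congr (_ *: _).
have h1 : sc 0 k ^+ 2 = (k`!)%:R.
  by have := sc_sq 0 k; rewrite fact0 mulr1 addn0.
have h2 : sc M k ^+ 2 = cc.
  by rewrite /cc -sc_sq mulfK // fact_neq0.
by rewrite h1 h2 mulrCA mulVf ?mulr1 // fact_neq0.
Qed.

Lemma ggU i (t : 'S_k) : Umx (psum t 1) *m gg i = gg (tcomp i t).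
Proof. by rewrite /gg mulmxA U_Tm. Qed.

Lemma Pff i (t : 'S_k) : P *m ff (tcomp i t) = P *m ff i.
Proof. by rewrite /ff !mulmxA absorb_front. Qed.

Lemma tcomp_inj (t : 'S_k) : injective (fun i : k.-tuple 'I_N => tcomp i t).
Proof. by move=> a b /= e; rewrite -[a]tcomp1 -[b]tcomp1 -(mulVg t) -!tcompM e. Qed.

Lemma PEU (s : 'S_(k + 0)) : P *m EE *m Umx s = P *m EE.
Proof.
have [t et] := psum_surj s^-1.
rewrite /EE mulmx_sumr mulmx_suml.
have e i : P *m (ff i *m (gg i)^T) *m Umx s = P *m (ff i *m (gg (tcomp i t))^T).
  rewrite -!mulmxA; congr (_ *m (_ *m _)).
  by rewrite -[Umx s]trmxK -trmx_mul Umx_tr et ggU.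
under eq_bigr do rewrite e.
rewrite [LHS](reindex_inj (@tcomp_inj (t^-1)%g)) /=; apply: eq_bigr => i _.
by rewrite tcompM mulgV tcomp1 (mulmxA P (ff _)) (Pff i (t^-1)%g) mulmxA.
Qed.

Lemma PEQ : P *m EE *m Q = P *m EE.
Proof.
rewrite [X in _ *m X]Psym_sum -scalemxAr mulmx_sumr.
under eq_bigr do rewrite PEU.
rewrite sumr_const card_Sn -scaler_nat scalerA.
by rewrite mulVf ?fact_neq0 // scale1r.
Qed.

Lemma final (l : C) : l != 0 ->
  eigmult (k + M) (Tk M k (psi *m adjmx psi)) l =
  eigmult (k + 0) (Wk M k (psi *m adjmx psi)) l.
Proof.
move=> l0; rewrite /eigmult /restr.
have PT : P *m Tk M k (psi *m adjmx psi) = Tk M k (psi *m adjmx psi).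
  by rewrite Tk_eq -scalemxAr !mulmxA PsymP.
have QW : Q *m Wk M k (psi *m adjmx psi) = Wk M k (psi *m adjmx psi).
  by rewrite Wk_eq -scalemxAr !mulmxA PsymP.
rewrite (restr_mup l0 (Psym_tr _) PT) (restr_mup l0 (Psym_tr _) QW) Tk_eq Wk_eq.
have eadj : Q *m adjmx EE *m P = adjmx EE *m P.
  by have h := congr1 adjmx PEQ; rewrite !adjmxM !Psym_adj in h; rewrite -mulmxA h.
have eX : cc *: (P *m EE *m adjmx EE *m P) = (cc *: (P *m EE *m Q)) *m (Q *m adjmx EE *m P).
  by rewrite -scalemxAl eadj PEQ !mulmxA.
have eY : cc *: (Q *m adjmx EE *m P *m EE *m Q) = (Q *m adjmx EE *m P) *m (cc *: (P *m EE *m Q)).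
  by rewrite -scalemxAr !mulmxA -(mulmxA _ P P) PsymP.
by rewrite eX eY mup_sylvester.
Qed.

End Main.





End Comb.

Theorem mainTheorem4 (C : numClosedFieldType) (N M k : nat)
  (HN : (2 <= N)%N) (HM : (1 <= M)%N)
  (psi : 'cV[C]_(tdim N M)) (Hpsi : Psym N M *m psi = psi) :
  let Gamma := psi *m adjmx psi in
  forall lambda : C, lambda != 0 ->
    eigmult (k + M) (Tk M k Gamma) lambda = eigmult (k + 0) (Wk M k Gamma) lambda.
Proof.
move=> Gamma l l0.
have x0 : 'I_N := Ordinal (leq_trans (isT : (0 < 2)%N) HN).
exact: (@final C N M k psi Hpsi x0 l l0).
Qed.
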